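(* Let $k\ge 2$, $p\in(0,1)$, $q=1-p$, and $M^{(k)}(z)=\sum_{n\ge1}M^{(k)}_n(p)z^n$. Then $$M^{(k)}(z)=\frac{z}{(1-z)^2}\left(k-\frac1q\right)+\frac{z}{1-z}\cdot\frac pq\cdot\frac{1}{1-\frac1q S^{(k)}(p^{k-1}qz)}$$ as formal power series in $z$.
   Context: Matchbox process: fix integers $k\ge 2$, $n\ge 1$ and $p\in(0,1)$, $q=1-p$. Initially $k$ boxes each contain $n$ matches. At each time step, independently of the past, with probability $p$ a match is removed from a box currently containing the largest number of matches, and with probability $q$ from a box currently containing the smallest number of matches (ties broken arbitrarily). The process is run until the first time some box is empty; the residue is the total number of matches in the other $k-1$ boxes at that time, and $M^{(k)}_n(p)$ is its expectation. For $i\ge1$, $s^{(k)}_i=\frac{k-1}{ki-1}\binom{ki-1}{i-1}$ and $S^{(k)}(z)=\sum_{i\ge1}s^{(k)}_iz^i$. *)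

(* Defs.v *)
From mathcomp Require Import all_boot all_order all_algebra.
From mathcomp Require Import reals.
Set Implicit Arguments. Unset Strict Implicit. Unset Printing Implicit Defensive.
Import Order.TTheory GRing.Theory Num.Theory.

Section Matchbox.
Variable R : realType.
Local Open Scope ring_scope.

(* A state is the sequence of box contents (length k). *)

Definition box_max (s : seq nat) : nat := (\max_(x <- s) x)%N.
Definition box_min (s : seq nat) : nat := \big[minn/head 0%N s]_(x <- s) x.

(* index of (the first) box with the largest / smallest number of matches;
   ties are broken by taking the first such box (the law of the residue
   does not depend on the tie-breaking rule). *)
Definition imax (s : seq nat) : nat := index (box_max s) s.
Definition imin (s : seq nat) : nat := index (box_min s) s.

Definition take_match (s : seq nat) (i : nat) : seq nat :=
  set_nth 0%N s i (nth 0%N s i).-1.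

(* expected residue starting from state s, with p = prob. of taking from a
   largest box, q = 1 - p from a smallest box; fuel bounds the number of
   steps (fuel = total number of matches is always enough). *)
Fixpoint exp_residue (p : R) (fuel : nat) (s : seq nat) : R :=
  if (0%N \in s) then (sumn s)%:R
  else match fuel with
       | 0%N => (sumn s)%:R
       | f.+1 => p * exp_residue p f (take_match s (imax s))
                 + (1 - p) * exp_residue p f (take_match s (imin s))
       end.

Definition M (k n : nat) (p : R) : R := exp_residue p (k * n) (nseq k n).

Definition fps := nat -> R.

Definition fps_const (c : R) : fps := fun n => if n == 0%N then c else 0.
Definition fps_X : fps := fun n => if n == 1%N then 1 else 0.
Definition fps_add (f g : fps) : fps := fun n => f n + g n.
Definition fps_opp (f : fps) : fps := fun n => - f n.
Definition fps_scal (c : R) (f : fps) : fps := fun n => c * f n.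
Definition fps_mul (f g : fps) : fps :=
  fun n => \sum_(i < n.+1) f i * g (n - i)%N.
(* substitution z |-> c z *)
Definition fps_subst_scal (c : R) (f : fps) : fps := fun n => c ^+ n * f n.

Fixpoint inv_coefs (f : fps) (n : nat) : seq R :=
  match n with
  | 0%N => [:: (f 0%N)^-1]
  | n'.+1 => let s := inv_coefs f n' in
      rcons s (- (f 0%N)^-1 *
               \sum_(1 <= i < n'.+2) f i * nth 0 s (n'.+1 - i)%N)
  end.
Definition fps_inv (f : fps) : fps := fun n => nth 0 (inv_coefs f n) n.

Definition s_coef (k i : nat) : R :=
  (k.-1)%:R / (k * i).-1%:R * ('C((k * i).-1, i.-1))%:R.
Definition S_fps (k : nat) : fps := fun i => if i == 0%N then 0 else s_coef k i.

Definition M_fps (k : nat) (p : R) : fps :=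
  fun n => if n == 0%N then 0 else M k n p.

Definition rhs_fps (k : nat) (p : R) : fps :=
  let q := 1 - p in
  let one_minus_z := fps_add (fps_const 1) (fps_opp fps_X) in
  fps_add
    (fps_scal (k%:R - q^-1)
       (fps_mul fps_X (fps_inv (fps_mul one_minus_z one_minus_z))))
    (fps_scal (p / q)
       (fps_mul (fps_mul fps_X (fps_inv one_minus_z))
          (fps_inv (fps_add (fps_const 1)
             (fps_opp (fps_scal q^-1
                (fps_subst_scal (p ^+ k.-1 * q) (S_fps k)))))))).
End Matchbox.

(* Main.v *)
Require Import Defs.
From mathcomp Require Import all_boot all_order all_algebra.
From mathcomp Require Import reals.
From mathcomp Require Import ring lra zify.
Import Order.TTheory GRing.Theory Num.Theory.
Set Implicit Arguments. Unset Strict Implicit. Unset Printing Implicit Defensive.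

Lemma bigmin_in (y : nat) s : \big[minn/y]_(x <- s) x \in y :: s.
Proof.
elim: s => [|x s IH]; first by rewrite big_nil mem_head.
rewrite big_cons.
move: IH; set b := \big[minn/y]_(_ <- s) _ => IH.
rewrite /minn; case: ltnP => h.
  by rewrite !inE eqxx orbT.
by move: IH; rewrite !inE => /orP[->//|->]; rewrite !orbT.
Qed.

Lemma bigmin_le (y : nat) s x : x \in s -> \big[minn/y]_(x <- s) x <= x.
Proof.
elim: s => [//|z s IH]; rewrite inE big_cons => /orP[/eqP->|/IH h].
  exact: geq_minl.
exact: leq_trans (geq_minr _ _) h.
Qed.

Lemma box_min_in s : s != [::] -> box_min s \in s.
Proof.
case: s => [//|x s _]; have := bigmin_in x (x :: s).
by rewrite /box_min /= inE => /orP[/eqP->|]; rewrite ?mem_head.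
Qed.

Lemma box_min_le s x : x \in s -> box_min s <= x.
Proof. exact: bigmin_le. Qed.

Lemma box_max_in s : s != [::] -> box_max s \in s.
Proof.
rewrite /box_max; elim: s => [//|x s IH] _; rewrite big_cons.
case: s IH => [|y s] IH; first by rewrite big_nil /maxn ltn0 mem_head.
move: IH; set b := \max_(_ <- _) _ => IH.
rewrite /maxn; case: ltnP => h; last by rewrite mem_head.
by rewrite inE IH ?orbT.
Qed.

Lemma box_max_ge s x : x \in s -> x <= box_max s.
Proof. by move=> h; rewrite /box_max (leq_bigmax_seq (F := id) x h). Qed.

Lemma box_max_char s v : v \in s -> (forall x, x \in s -> x <= v) -> box_max s = v.
Proof.
move=> vs h; apply/eqP; rewrite eqn_leq (box_max_ge vs) andbT.
apply: h; apply: box_max_in; by case: s vs.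
Qed.

Lemma box_min_char s v : v \in s -> (forall x, x \in s -> v <= x) -> box_min s = v.
Proof.
move=> vs h; apply/eqP; rewrite eqn_leq (box_min_le vs) /=.
apply: h; apply: box_min_in; by case: s vs.
Qed.

Lemma box_max_perm s t : perm_eq s t -> box_max s = box_max t.
Proof. by move=> h; rewrite /box_max (perm_big _ h). Qed.

Lemma box_min_perm s t : perm_eq s t -> box_min s = box_min t.
Proof.
move=> h; case: s h => [|x s] h.
  by case: t h => // y t /perm_size.
have tn : t != [::] by case: t h => // /perm_size.
apply: box_min_char; first by rewrite (perm_mem h) box_min_in.
by move=> y; rewrite (perm_mem h); exact: box_min_le.
Qed.

Lemma tm_perm s i : i < size s ->
  perm_eq (take_match s i) ((nth 0 s i).-1 :: rem (nth 0 s i) s).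
Proof.
move=> hi; set x := nth 0 s i.
have xs : x \in s by rewrite mem_nth.
have es : s = take i s ++ x :: drop i.+1 s by rewrite -drop_nth // cat_take_drop.
have /permP hr := perm_to_rem xs.
rewrite /take_match set_nthE hi -/x; apply/permP => P.
have := hr P; rewrite {1}es /= !count_cat /= => e.
lia.
Qed.

Lemma tm_max s : s != [::] ->
  perm_eq (take_match s (imax s)) ((box_max s).-1 :: rem (box_max s) s).
Proof.
move=> sn; have h := box_max_in sn.
by rewrite (perm_trans (tm_perm _)) ?index_mem // /imax nth_index.
Qed.

Lemma tm_min s : s != [::] ->
  perm_eq (take_match s (imin s)) ((box_min s).-1 :: rem (box_min s) s).
Proof.
move=> sn; have h := box_min_in sn.
by rewrite (perm_trans (tm_perm _)) ?index_mem // /imin nth_index.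
Qed.

Lemma perm_rem_ (s t : seq nat) x : perm_eq s t -> perm_eq (rem x s) (rem x t).
Proof.
move=> h; case xs: (x \in s).
  have xt : x \in t by rewrite -(perm_mem h).
  have h1 := perm_to_rem xs; have h2 := perm_to_rem xt.
  rewrite perm_sym in h1; rewrite -(perm_cons x).
  exact: perm_trans h1 (perm_trans h h2).
have xt : x \in t = false by rewrite -(perm_mem h).
by rewrite !rem_id ?xs ?xt.
Qed.

Section ER.
Variable R : realType.
Variable p : R.
Local Open Scope ring_scope.

Lemma er_perm f s t : perm_eq s t -> exp_residue p f s = exp_residue p f t.
Proof.
elim: f s t => [|f IH] s t h /=; first by rewrite (perm_mem h) (perm_sumn h).
rewrite (perm_mem h) (perm_sumn h); case: ifP => // _.
case: s h => [|x s] h.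
  by move: (perm_size h); case: t {h}.
have tn : t != [::] by case: t h => // /perm_size.
have sn : x :: s != [::] by [].
rewrite (IH _ _ (tm_max sn)) (IH _ _ (tm_min sn)) (IH _ _ (tm_max tn)) (IH _ _ (tm_min tn)).
rewrite (box_max_perm h) (box_min_perm h).
have hc : forall v, perm_eq (v.-1 :: rem v (x :: s)) (v.-1 :: rem v t).
  by move=> v; rewrite perm_cons perm_rem_.
by rewrite (IH _ _ (hc _)) (IH _ _ (hc (box_min t))).
Qed.
End ER.

Section States.
Variable m : nat.
Hypothesis m_gt0 : 0 < m.

Definition bal H := nseq (H %% m) (H %/ m).+1 ++ nseq (m - H %% m) (H %/ m).
Definition st a D := a :: bal (m * a + D).

Lemma bal_eq c r : r < m -> bal (c * m + r) = nseq r c.+1 ++ nseq (m - r) c.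
Proof.
move=> hr; rewrite /bal divnMDl // divn_small // addn0.
by rewrite modnMDl modn_small.
Qed.

Lemma sumn_bal H : sumn (bal H) = H.
Proof.
rewrite /bal sumn_cat !sumn_nseq.
have hr := ltn_pmod H m_gt0; have e := divn_eq H m.
move: hr e; set c := H %/ m; set r := H %% m => hr e.
have hcr : c * r <= c * m by rewrite leq_mul2l ltnW ?orbT.
rewrite [RHS]e mulSn mulnBr (mulnC c m); lia.
Qed.

Lemma mem_bal H x : x \in bal H -> H %/ m <= x.
Proof.
by rewrite /bal mem_cat !mem_nseq => /orP[/andP[_ /eqP->]|/andP[_ /eqP->]].
Qed.

Lemma le_div a D : a <= (m * a + D) %/ m.
Proof. by rewrite leq_divRL // mulnC leq_addr. Qed.

Lemma st0_in D : 0 \in st 0 D.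
Proof. by rewrite mem_head. Qed.

Lemma sumn_st a D : sumn (st a D) = a + (m * a + D).
Proof. by rewrite /= sumn_bal. Qed.

Lemma st_notin0 a D : 0 \notin st a.+1 D.
Proof.
rewrite inE negb_or /=; apply/negP => /mem_bal h.
by have := leq_trans (le_div a.+1 D) h.
Qed.

Lemma st_min a D : box_min (st a D) = a.
Proof.
apply: box_min_char; first exact: mem_head.
move=> x; rewrite inE => /orP[/eqP->//|/mem_bal h].
exact: leq_trans (le_div a D) h.
Qed.

Lemma step_min a D :
  (box_min (st a.+1 D.+1)).-1 :: rem (box_min (st a.+1 D.+1)) (st a.+1 D.+1)
  = st a (D.+1 + m).
Proof.
rewrite st_min /st /= eqxx; congr (_ :: bal _); nia.
Qed.

Lemma step0 a :
  (box_max (st a.+1 0)).-1 :: rem (box_max (st a.+1 0)) (st a.+1 0) = st a m.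
Proof.
have e : st a.+1 0 = a.+1 :: nseq m a.+1.
  rewrite /st addn0 mulnC -[a.+1 * m]addn0 bal_eq // subn0.
  by rewrite /nseq /=.
have -> : box_max (st a.+1 0) = a.+1.
  apply: box_max_char; first exact: mem_head.
  by move=> x; rewrite e inE mem_nseq => /orP[/eqP->|/andP[_ /eqP->]].
rewrite e /= eqxx /st; congr (_ :: _).
have -> : m * a + m = a.+1 * m + 0 by nia.
by rewrite bal_eq // subn0.
Qed.

Lemma step0' a :
  (box_min (st a.+1 0)).-1 :: rem (box_min (st a.+1 0)) (st a.+1 0) = st a m.
Proof.
rewrite -step0.
have e : st a.+1 0 = a.+1 :: nseq m a.+1.
  rewrite /st addn0 mulnC -[a.+1 * m]addn0 bal_eq // subn0.
  by rewrite /nseq /=.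
have -> : box_max (st a.+1 0) = a.+1.
  apply: box_max_char; first exact: mem_head.
  by move=> x; rewrite e inE mem_nseq => /orP[/eqP->|/andP[_ /eqP->]].
by rewrite st_min.
Qed.

Lemma step_max a D :
  perm_eq ((box_max (st a D.+1)).-1 :: rem (box_max (st a D.+1)) (st a D.+1))
          (st a D).
Proof.
set H := m * a + D.
have eH : m * a + D.+1 = H.+1 by rewrite addnS.
have hr := ltn_pmod H.+1 m_gt0.
have ha := le_div a D.+1.
rewrite /st eH in ha *.
move: ha hr; rewrite /bal.
set c := H.+1 %/ m; set r := H.+1 %% m => ha hr.
have eH1 : H.+1 = c * m + r by rewrite /c /r -divn_eq.
case: r eH1 hr => [|r'] eH1 hr.
-
  have cpos : a < c.
    rewrite ltn_neqAle ha andbT; apply/negP => /eqP ec.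
    move: eH1; rewrite /H -ec addn0; nia.
  rewrite subn0 /=.
  have em : nseq m c = c :: nseq m.-1 c by rewrite -(prednK m_gt0).
  rewrite em.
  have -> : box_max (a :: c :: nseq m.-1 c) = c.
    apply: box_max_char; first by rewrite !inE eqxx orbT.
    move=> x; rewrite !inE mem_nseq.
    by case/orP=> [/eqP->|/orP[/eqP->//|/andP[_ /eqP->]]]; [exact: ltnW|].
  have ac : (a == c) = false by apply/negbTE; rewrite neq_ltn cpos.
  rewrite ac /= eqxx.
  have eH2 : H = c.-1 * m + m.-1.
    move: eH1; case: (c) cpos => // c' _ e1; have := prednK m_gt0; simpl; nia.
  have hm : m.-1 < m by rewrite prednK.
  rewrite -/H eH2; rewrite -/(bal (c.-1 * m + m.-1)) bal_eq // (_ : m - m.-1 = 1); last by rewrite -{1}(prednK m_gt0) subSnn.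
  by rewrite /= cats1 -rcons_cons perm_sym (ltn_predK cpos) perm_rcons.
-
  rewrite /=.
  have -> : box_max (a :: c.+1 :: nseq r' c.+1 ++ nseq (m - r'.+1) c) = c.+1.
    apply: box_max_char; first by rewrite !inE eqxx orbT.
    move=> x; rewrite !inE mem_cat !mem_nseq.
    case/orP=> [/eqP->|/orP[/eqP->//|/orP[/andP[_ /eqP->//]|/andP[_ /eqP->//]]]].
    exact: (leq_trans ha).
  have ac : (a == c.+1) = false by apply/negbTE; rewrite neq_ltn ltnS ha.
  rewrite ac /= eqxx.
  have eH2 : H = c * m + r' by lia.
  rewrite -/H eH2 -/(bal (c * m + r')) bal_eq; last by lia.
  have -> : m - r' = (m - r'.+1).+1 by lia.
  by apply/permP => P /=; rewrite !count_cat /=; lia.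
Qed.
End States.

Section Phi.
Variable R : realType.
Variable p : R.
Variable m : nat.
Hypothesis m_gt0 : 0 < m.
Variable Phi : nat -> nat -> R.
Local Open Scope ring_scope.
Hypothesis Phi0 : forall D, Phi 0%N D = D%:R.
Hypothesis Phi1 : forall a, Phi a.+1 0%N = Phi a m.
Hypothesis Phi2 : forall a D, Phi a.+1 D.+1 = p * Phi a.+1 D + (1 - p) * Phi a (D.+1 + m)%N.

Lemma er0 s : exp_residue p 0 s = (sumn s)%:R.
Proof. by rewrite /=; case: ifP. Qed.
Lemma erS_in f s : 0%N \in s -> exp_residue p f.+1 s = (sumn s)%:R.
Proof. by rewrite /= => ->. Qed.
Lemma erS f s : 0%N \notin s -> exp_residue p f.+1 s =
  p * exp_residue p f (take_match s (imax s))
  + (1 - p) * exp_residue p f (take_match s (imin s)).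
Proof. by move=> h; rewrite /= (negbTE h). Qed.

Lemma er_st fuel a D : (m.+1 * a + D <= fuel)%N ->
  exp_residue p fuel (st m a D) = Phi a D.
Proof.
elim: fuel a D => [|f IH] a D hle.
  have [-> ->] : a = 0%N /\ D = 0%N by lia.
  by rewrite er0 (sumn_st m_gt0) Phi0 muln0.
case: a hle => [|a] hle.
  by rewrite erS_in ?st0_in // (sumn_st m_gt0) Phi0 muln0 !add0n.
rewrite erS ?st_notin0 //.
have sn : st m a.+1 D != [::] by [].
rewrite (er_perm _ _ (tm_max sn)) (er_perm _ _ (tm_min sn)).
case: D hle sn => [|D] hle sn.
  rewrite step0 // step0' // IH; last by nia.
  by rewrite Phi1; ring.
rewrite (er_perm _ _ (step_max m_gt0 _ _)) step_min // !IH; try nia.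
by rewrite Phi2.
Qed.
End Phi.

Section Alg.
Variable R : realType.
Variable p : R.
Variable m : nat.
Hypothesis m_gt0 : (0 < m)%N.
Local Open Scope ring_scope.
Let q := 1 - p.

Definition hB (D j : nat) : R :=
  match j with
  | 0%N => 1
  | j'.+1 => ('C(D + m.+1 * j - 1, j))%:R - m%:R * ('C(D + m.+1 * j - 1, j'))%:R
  end.

Definition hh D j := hB D j * p ^+ (D + m * j) * q ^+ j.
Arguments hB : simpl never.
Arguments hh : simpl never.

Lemma hB0 j : hB 0 j.+1 = 0.
Proof.
rewrite /hB add0n.
set N := (m.+1 * j.+1 - 1)%N.
have e := mul_bin_left N j.
have eN : (N - j = m * j.+1)%N by rewrite /N; nia.
rewrite eN [(m * _)%N]mulnC -mulnA in e.
have -> : 'C(N, j.+1) = (m * 'C(N, j))%N.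
  by apply/eqP; rewrite -(eqn_pmul2l (ltn0Sn j)) e.
by rewrite natrM subrr.
Qed.

Lemma hBrec D j : hB D.+1 j.+1 = hB D j.+1 + hB (D + m.+1) j.
Proof.
case: j => [|j].
  rewrite /hB !muln1 !bin1 !bin0.
  have -> : (D.+1 + m.+1 - 1 = D + m.+1)%N by lia.
  have -> : (D + m.+1 - 1 = D + m)%N by lia.
  rewrite !natrD; ring.
rewrite /hB.
set M := (D + m.+1 * j.+2 - 1)%N.
have e1 : (D.+1 + m.+1 * j.+2 - 1 = M.+1)%N by rewrite /M; nia.
have e2 : (D + m.+1 + m.+1 * j.+1 - 1 = M)%N by rewrite /M; nia.
rewrite e1 e2 !binS !natrD; ring.
Qed.

Lemma hh00 : hh 0 0 = 1.
Proof. by rewrite /hh /= muln0 !expr0 !mulr1. Qed.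

Lemma hh0S j : hh 0 j.+1 = 0.
Proof. by rewrite /hh hB0 !mul0r. Qed.

Lemma hh_rec0 D : hh D.+1 0 = p * hh D 0.
Proof. by rewrite /hh /= !muln0 !addn0 !mul1r !mulr1 exprS. Qed.

Lemma hh_rec D j : hh D.+1 j.+1 = p * hh D j.+1 + q * hh (D.+1 + m) j.
Proof.
rewrite /hh hBrec (_ : (D.+1 + m = D + m.+1)%N); last by lia.
have -> : (D.+1 + m * j.+1 = (D + m * j.+1).+1)%N by lia.
have -> : (D + m.+1 + m * j = (D + m * j.+1).+1)%N by nia.
rewrite !exprS; ring.
Qed.

(* the excursion weights and the return sequence *)
Definition E (i : nat) : R := if i is i'.+1 then hh m i' else 0.
Lemma ES i : E i.+1 = hh m i. Proof. by []. Qed.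
Arguments E : simpl never.

Variable P : nat -> R.
Hypothesis P0 : P 0%N = 1.
Hypothesis PS : forall n, P n.+1 = \sum_(i < n.+1) E i.+1 * P (n - i)%N.

Definition Gz n := \sum_(i < n) P i.
Definition W a D := \sum_(j < a) hh D j * Gz (a - j)%N.
Definition Phi a D := D%:R + a%:R * (m.+1%:R - q^-1) + p / q * W a D.

Lemma GzS n : Gz n.+1 = Gz n + P n.
Proof. by rewrite /Gz big_ord_recr. Qed.
Lemma Gz0 : Gz 0 = 0.
Proof. by rewrite /Gz big_ord0. Qed.

Lemma Gz_rec a : Gz a.+1 = 1 + \sum_(j < a) E j.+1 * Gz (a - j)%N.
Proof.
elim: a => [|a IH]; first by rewrite GzS Gz0 P0 big_ord0 add0r addr0.
rewrite GzS IH PS -addrA; congr (_ + _).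
rewrite [in RHS](eq_bigr (fun j : 'I_a.+1 => E j.+1 * Gz (a - j) + E j.+1 * P (a - j)%N)); last first.
  move=> j _; rewrite subSn; last by rewrite -ltnS ltn_ord.
  by rewrite GzS mulrDr.
rewrite big_split /=; congr (_ + _).
by rewrite big_ord_recr /= subnn Gz0 mulr0 addr0.
Qed.

Lemma W0 D : W 0 D = 0.
Proof. by rewrite /W big_ord0. Qed.

Lemma W1 a : W a.+1 0 = 1 + W a m.
Proof.
rewrite /W big_ord_recl hh00 mul1r subn0 big1 ?addr0; last first.
  by move=> i _; rewrite lift0 hh0S mul0r.
by rewrite Gz_rec; congr (_ + _); apply: eq_bigr => i _; rewrite ES.
Qed.

Lemma W2 a D : W a.+1 D.+1 = p * W a.+1 D + q * W a (D.+1 + m).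
Proof.
rewrite /W !big_ord_recl /= hh_rec0 subn0 mulrDr -!mulrA -addrA; congr (_ + _).
rewrite !mulr_sumr -big_split /=; apply: eq_bigr => i _.
by rewrite subSS hh_rec; ring.
Qed.

Hypothesis qn0 : q != 0.

Lemma Phi0 D : Phi 0 D = D%:R.
Proof. by rewrite /Phi W0 mul0r mulr0 !addr0. Qed.

Lemma Phi1 a : Phi a.+1 0 = Phi a m.
Proof.
have hq : 1 - p != 0 := qn0.
rewrite /Phi W1 -[(a.+1)%:R]natr1 -[(m.+1)%:R]natr1 /q; field; exact: hq.
Qed.

Lemma Phi2 a D : Phi a.+1 D.+1 = p * Phi a.+1 D + (1 - p) * Phi a (D.+1 + m).
Proof.
have hq : 1 - p != 0 := qn0.
rewrite /Phi W2 natrD -[(a.+1)%:R]natr1 -[(m.+1)%:R]natr1 -[(D.+1)%:R]natr1 /q; field; exact: hq.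
Qed.

End Alg.

Section FPS.
Variable R : realType.
Local Open Scope ring_scope.

Lemma size_inv_coefs (f : fps R) n : size (inv_coefs f n) = n.+1.
Proof. by elim: n => [//|n IH] /=; rewrite size_rcons IH. Qed.

Lemma inv_coefs_nth (f : fps R) n i : (i <= n)%N -> nth 0 (inv_coefs f n) i = fps_inv f i.
Proof.
elim: n => [|n IH] hi.
  by move: hi; rewrite leqn0 => /eqP->.
case: (ltnP i n.+1) => h.
  by rewrite /= nth_rcons size_inv_coefs h IH.
have -> : i = n.+1 by apply/eqP; rewrite eqn_leq hi h.
by [].
Qed.

Lemma fps_inv0 (f : fps R) : fps_inv f 0 = (f 0%N)^-1.
Proof. by []. Qed.

Lemma fps_invS (f : fps R) n : fps_inv f n.+1 =
  - (f 0%N)^-1 * \sum_(1 <= i < n.+2) f i * fps_inv f (n.+1 - i)%N.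
Proof.
rewrite /fps_inv /= nth_rcons size_inv_coefs ltnn eqxx; congr (_ * _).
apply: eq_big_nat => i /andP[h1 h2]; rewrite inv_coefs_nth //.
by rewrite leq_subLR -addn1 addnC leq_add2r.
Qed.

Lemma fps_mulE (f g : fps R) n : fps_mul f g n = \sum_(i < n.+1) f i * g (n - i)%N.
Proof. by []. Qed.

Lemma mulX (g : fps R) n : fps_mul (fps_X R) g n.+1 = g n.
Proof.
rewrite /fps_mul big_ord_recl big_ord_recl big1 ?addr0; last first.
  by move=> i _; rewrite /fps_X /bump /= mul0r.
by rewrite /fps_X /bump /= mul0r add0r mul1r subn1.
Qed.

Lemma mulX0 (g : fps R) : fps_mul (fps_X R) g 0 = 0.
Proof. by rewrite /fps_mul big_ord1 /fps_X /= mul0r. Qed.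

Definition omz := fps_add (fps_const 1) (fps_opp (fps_X R)).

Lemma omz0 : omz 0%N = 1. Proof. by rewrite /omz /fps_add /fps_opp /fps_const /fps_X /= oppr0 addr0. Qed.
Lemma omz1 : omz 1%N = -1. Proof. by rewrite /omz /fps_add /fps_opp /fps_const /fps_X /= add0r. Qed.
Lemma omzSS i : omz i.+2 = 0. Proof. by rewrite /omz /fps_add /fps_opp /fps_const /fps_X /= oppr0 addr0. Qed.

Lemma inv_omz n : fps_inv omz n = 1.
Proof.
elim: n => [|n IH]; first by rewrite fps_inv0 omz0 invr1.
rewrite fps_invS omz0 invr1 big_nat_recl // omz1 subSS subn0 IH.
rewrite big1_seq ?addr0; first by rewrite mulr1 mulrN1 opprK.
by move=> i /andP[_]; rewrite mem_index_iota => /andP[h _]; case: i h => // i _; rewrite omzSS mul0r.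
Qed.

Lemma omz_ge2 i : (1 < i)%N -> omz i = 0.
Proof. by case: i => [|[|i]] // _; rewrite omzSS. Qed.

Definition omz2 := fps_mul omz omz.

Lemma omz2_0 : omz2 0%N = 1.
Proof. by rewrite /omz2 /fps_mul big_ord1 /= omz0 mulr1. Qed.
Lemma omz2_1 : omz2 1%N = -2.
Proof.
rewrite /omz2 /fps_mul big_ord_recl big_ord1 /= omz0 omz1; ring.
Qed.
Lemma omz2_2 : omz2 2%N = 1.
Proof.
rewrite /omz2 /fps_mul big_ord_recl big_ord_recl big_ord1 /= /bump /= omz0 omz1 omzSS; ring.
Qed.
Lemma omz2_SSS n : omz2 n.+3 = 0.
Proof.
rewrite /omz2 /fps_mul big1 // => i _.
case: (ltnP 1 i) => h; first by rewrite omz_ge2 // mul0r.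
rewrite (omz_ge2 (i := (n.+3 - i)%N)) ?mulr0 //.
move: h; case: (nat_of_ord i) => [|[|]] //.
Qed.

Lemma inv_omz2 n : fps_inv omz2 n = (n.+1)%:R.
Proof.
elim/ltn_ind: n => n IH.
case: n IH => [|n] IH; first by rewrite fps_inv0 omz2_0 invr1.
rewrite fps_invS omz2_0 invr1.
case: n IH => [|n] IH.
  by rewrite big_nat1 omz2_1 subnn IH //; ring.
rewrite big_nat_recl // big_nat_recl // big1_seq ?addr0; last first.
  move=> i /andP[_]; rewrite mem_index_iota => /andP[h _].
  by case: i h => // i _; rewrite omz2_SSS mul0r.
rewrite omz2_1 omz2_2 subSS subn0 subSS subn1 /= !IH //.
rewrite -[(n.+3)%:R]natr1 -[(n.+2)%:R]natr1 -[(n.+1)%:R]natr1; ring.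
Qed.

End FPS.

From Stdlib Require Import FunctionalExtensionality.

Section Main.
Variable R : realType.
Variable m : nat.
Hypothesis m_gt0 : (0 < m)%N.
Variable p : R.
Local Open Scope ring_scope.
Let q := 1 - p.
Hypothesis qn0 : q != 0.

Lemma hB_s i : hB R m m i =
  m%:R / ((m.+1 * i.+1).-1)%:R * ('C((m.+1 * i.+1).-1, i))%:R.
Proof.
have mn0 : (m%:R : R) != 0 by rewrite pnatr_eq0 -lt0n.
case: i => [|j].
  by rewrite /hB muln1 /= bin0 mulr1 divff.
rewrite /hB.
set N' := (m + m.+1 * j.+1 - 1)%N.
have eN : (m.+1 * j.+2).-1 = N'.+1 by rewrite /N'; nia.
rewrite eN.
have e1 := binS N' j.
have e2 := mul_bin_diag N'.+1 j.
have hN : (N'.+1%:R : R) = m%:R + m.+1%:R * j.+1%:R.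
  by rewrite -natrM -natrD; congr (_%:R); rewrite /N'; nia.
have Nn0 : (N'.+1%:R : R) != 0 by rewrite pnatr_eq0.
set A := ('C(N', j.+1))%:R : R.
set B := ('C(N', j))%:R : R.
set C := ('C(N'.+1, j.+1))%:R : R.
have eC : C = A + B by rewrite /C e1 natrD.
have e2' : (N'.+1 * 'C(N', j) = j.+1 * 'C(N'.+1, j.+1))%N := mul_bin_diag N'.+1 j.
have eB : N'.+1%:R * B = j.+1%:R * C by rewrite /B /C -!natrM e2'.
apply: (mulfI Nn0).
have -> : N'.+1%:R * (m%:R / N'.+1%:R * C) = m%:R * C.
  by field; move: Nn0; rewrite -natr1 addrC.
have -> : A = C - B by rewrite eC; ring.
have -> : N'.+1%:R * (C - B - m%:R * B) = N'.+1%:R * C - m.+1%:R * (N'.+1%:R * B).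
  by rewrite (mulrSr _ m); ring.
rewrite eB hN !mulrSr; ring.
Qed.

Definition Tser : fps R := fps_add (fps_const 1) (fps_opp (fps_scal q^-1
                (fps_subst_scal (p ^+ m * q) (S_fps R m.+1)))).

Lemma Tser0 : Tser 0%N = 1.
Proof. by rewrite /Tser /fps_add /fps_opp /fps_scal /fps_subst_scal /S_fps /fps_const /= !mulr0 oppr0 addr0. Qed.

Lemma TserS i : Tser i.+1 = - E p m i.+1.
Proof.
rewrite /Tser /fps_add /fps_opp /fps_scal /fps_subst_scal /S_fps /fps_const /=.
rewrite add0r /hh /s_coef hB_s (succnK m) (succnK i); congr (- _).
rewrite exprMn -exprM exprS mulnS exprD.
have hqq : q^-1 * q = 1 by rewrite mulVf.
rewrite -/q; move: hqq; move: (q^-1) => u hqq.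
move: (((m.+1 * i.+1).-1%:R)^-1 : R) => v.
by rewrite -[RHS]mul1r -hqq; ring.
Qed.

Let P := fps_inv Tser.

Lemma P0 : P 0%N = 1.
Proof. by rewrite /P fps_inv0 Tser0 invr1. Qed.

Lemma PS n : P n.+1 = \sum_(i < n.+1) E p m i.+1 * P (n - i)%N.
Proof.
rewrite /P fps_invS Tser0 invr1 big_add1 /= big_mkord mulr_sumr.
apply: eq_bigr => i _; rewrite TserS subSS ES; ring.
Qed.

Lemma W_0 a : W p m P a 0 = Gz P a.
Proof.
case: a => [|a]; first by rewrite W0 /Gz big_ord0.
rewrite /W big_ord_recl hh00 mul1r subn0 big1 ?addr0 //.
by move=> i _; rewrite lift0 hh0S // mul0r.
Qed.

Lemma M_eq n : M m.+1 n p = n%:R * (m.+1%:R - q^-1) + p / q * Gz P n.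
Proof.
rewrite /M.
have -> : nseq m.+1 n = st m n 0.
  rewrite /st addn0 mulnC -[(n * m)%N]addn0 bal_eq // subn0.
  by [].
rewrite (@er_st R p m m_gt0 (Phi p m P)).
- by rewrite /Phi W_0 add0r.
- exact: Phi0.
- by move=> a; apply: Phi1; try exact: P0; try exact: PS; try exact: qn0.
- by move=> a D; apply: Phi2; try exact: P0; try exact: PS; try exact: qn0.
- by rewrite addn0.
Qed.

Lemma rhs_eqS n : rhs_fps m.+1 p n.+1 =
  n.+1%:R * (m.+1%:R - q^-1) + p / q * Gz P n.+1.
Proof.
have -> : rhs_fps m.+1 p n.+1 =
  (m.+1%:R - q^-1) * fps_mul (fps_X R) (fps_inv (omz2 R)) n.+1
  + p / q * fps_mul (fps_mul (fps_X R) (fps_inv (omz R))) P n.+1 by [].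
rewrite mulX inv_omz2 mulrC; congr (_ + _); congr (_ * _).
rewrite fps_mulE big_ord_recl mulX0 mul0r add0r.
rewrite (eq_bigr (fun i : 'I_n.+1 => P (n - i)%N)); last first.
  by move=> i _; rewrite lift0 mulX inv_omz mul1r subSS.
rewrite /Gz (reindex_inj rev_ord_inj) /=; apply: eq_bigr => i _.
by rewrite subSS subKn // -ltnS.
Qed.

Lemma rhs_eq0 : rhs_fps m.+1 p 0%N = 0.
Proof.
have -> : rhs_fps m.+1 p 0%N =
  (m.+1%:R - q^-1) * fps_mul (fps_X R) (fps_inv (omz2 R)) 0%N
  + p / q * fps_mul (fps_mul (fps_X R) (fps_inv (omz R))) P 0%N by [].
by rewrite mulX0 fps_mulE big_ord1 mulX0 mul0r !mulr0 addr0.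
Qed.

End Main.

Unset Implicit Arguments.
Local Open Scope ring_scope.

Theorem theorem3p3 (R : realType) (k : nat) (p : R) :
  (2 <= k)%N -> 0 < p < 1 ->
  M_fps k p = rhs_fps k p.
Proof.
move=> hk /andP[hp0 hp1].
have qn0 : 1 - p != 0 by rewrite subr_eq0 eq_sym (lt_eqF hp1).
case: k hk => [//|m] hk.
have m_gt0 : (0 < m)%N by [].
apply: functional_extensionality => n.
case: n => [|n].
  by rewrite rhs_eq0.
rewrite rhs_eqS /M_fps /=.
exact: (M_eq m_gt0 qn0).
Qed.
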